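(* SeqPAV satisfies $\kappa$-group representation for $\kappa(\alpha,\lambda)=\lceil \frac{2(\lambda+1)^2}{\alpha^2}\rceil$. That is, for every rational $\alpha\in(0,1]$, every $\lambda\in\mathbb N$, every profile $P$, every ranking $r$ that SeqPAV may output on $P$ (under any tie-breaking), and every group $N'$ that is $(\alpha,\lambda)$-significant in $P$, we have $\mathrm{avg}(N',r_{\le k})\ge\lambda$ where $k=\lceil \frac{2(\lambda+1)^2}{\alpha^2}\rceil$.
   Context: Let $N=[n]$ be a finite set of voters and $A$ a finite set of $m$ alternatives; a profile $P=(A_1,\dots,A_n)$ gives each voter $i$ a non-empty approval set $A_i\subseteq A$. A ranking $r=(r_1,\dots,r_m)$ is a linear order of $A$, $r_{\le k}=\{r_1,\dots,r_k\}$, with $r_{\le k}=A$ for $k\ge m$. For nonempty $N'\subseteq N$ and $S\subseteq A$, $\mathrm{avg}(N',S)=\frac1{|N'|}\sum_{i\in N'}|A_i\cap S|$. The cohesiveness of $N'$ is $\lambda(N')=|\bigcap_{i\in N'}A_i|$; $N'$ is $(\alpha,\lambda)$-significant in $P$ if $|N'|=\lceil\alpha n\rceil$ and $\lambda(N')\ge\lambda$. For a weight vector $\mathbf w=(w_1,w_2,\dots)$ of nonnegative reals and $S\subseteq A$, let $w(S)=\sum_{i\in N}\sum_{j=1}^{|A_i\cap S|}w_j$. The rule $\mathbf w$-RAV builds $r$ iteratively from the empty ranking: at step $k\in[m]$ it appends an unranked alternative $a$ maximizing $w(r_{\le k-1}\cup\{a\})-w(r_{\le k-1})$ (ties broken arbitrarily).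 SeqPAV is $\mathbf w$-RAV with $\mathbf w=(1,\frac12,\frac13,\dots)$. *)

(* Defs.v *)
From HB Require Import structures.
From mathcomp Require Import all_boot all_order all_algebra.
Set Implicit Arguments. Unset Strict Implicit. Unset Printing Implicit Defensive.
Import Order.TTheory GRing.Theory Num.Theory.
Local Open Scope ring_scope.

Definition profile (n : nat) (A : finType) := 'I_n -> {set A}.

Definition valid_profile n (A : finType) (P : profile n A) : Prop :=
  forall i : 'I_n, P i != set0.

(* a ranking is a linear order of A, represented as a duplicate-free list
   enumerating A; r_{<=k} is the set of its first k entries (all of A if k >= m) *)
Definition is_ranking (A : finType) (r : seq A) : Prop := perm_eq r (enum A).

Definition prefix_set (A : finType) (r : seq A) (k : nat) : {set A} :=
  [set x in take k r].

Definition avg n (A : finType) (P : profile n A) (N' : {set 'I_n}) (S : {set A}) : rat :=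
  (\sum_(i in N') (#|P i :&: S|)%:R) / (#|N'|)%:R.

Definition cohesiveness n (A : finType) (P : profile n A) (N' : {set 'I_n}) : nat :=
  #|\bigcap_(i in N') P i|.

Definition significant n (A : finType) (P : profile n A) (alpha : rat) (lambda : nat)
  (N' : {set 'I_n}) : Prop :=
  (#|N'|)%:Z = Num.ceil (alpha * n%:R) /\ (lambda <= cohesiveness P N')%N.

(* w(S) = sum_i sum_{j=1}^{|A_i cap S|} w_j  (weights indexed from 1) *)
Definition wscore n (A : finType) (w : nat -> rat) (P : profile n A) (S : {set A}) : rat :=
  \sum_(i < n) \sum_(1 <= j < (#|P i :&: S|).+1) w j.

(* r is a possible output of w-RAV on P (for some tie-breaking): at each step k
   (0-indexed here), the appended alternative r_k maximizes the marginal gain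
   among the unranked alternatives. *)
Definition wRAV_output n (A : finType) (w : nat -> rat) (P : profile n A) (r : seq A) : Prop :=
  is_ranking r /\
  forall (k : nat) (a : A), (k < size r)%N -> a \notin take k r ->
    wscore w P (prefix_set r k :|: [set a]) - wscore w P (prefix_set r k)
    <= wscore w P (prefix_set r k :|: [set nth a r k]) - wscore w P (prefix_set r k).

Definition pav_weights (j : nat) : rat := (j%:R)^-1.

Definition seqPAV_output n (A : finType) (P : profile n A) (r : seq A) : Prop :=
  wRAV_output pav_weights P r.

(* Main.v *)
Require Import Defs.
From HB Require Import structures.
From mathcomp Require Import all_boot all_order all_algebra.
From mathcomp Require Import ring lra.
Import Order.TTheory GRing.Theory Num.Theory.
Local Open Scope ring_scope.

Lemma gain_formula n (A : finType) (P : profile n A) (S : {set A}) (a : A) :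
  a \notin S ->
  wscore pav_weights P (S :|: [set a]) - wscore pav_weights P S =
  \sum_(i < n) (if a \in P i then ((#|P i :&: S|).+1)%:R^-1 else 0).
Proof.
move=> aS; rewrite /wscore -sumrB; apply: eq_bigr => i _.
have E : P i :&: (S :|: [set a]) =
   (if a \in P i then a |: (P i :&: S) else P i :&: S).
  apply/setP => y; case: ifP => ha; rewrite !inE.
    by case: (eqVneq y a) => [->|]; rewrite ?ha ?orbT ?orbF ?andbT.
  by case: (eqVneq y a) => [->|]; rewrite ?ha ?orbT ?orbF ?andbF.
rewrite E; case: ifP => ha; last by rewrite subrr.
rewrite cardsU1 inE (negbTE aS) andbF /= add1n.
by rewrite big_nat_recr //= addrAC subrr add0r.
Qed.

Lemma ceil_ge_rat (x : rat) : x <= (Num.ceil x)%:~R.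
Proof. by case/andP: (ceil_itv x). Qed.
Lemma card_step (A : finType) (Q S : {set A}) (a : A) : a \notin S ->
  #|Q :&: (S :|: [set a])| = (#|Q :&: S| + (a \in Q))%N.
Proof.
move=> aS.
have E : Q :&: (S :|: [set a]) =
   (if a \in Q then a |: (Q :&: S) else Q :&: S).
  apply/setP => y; case: ifP => ha; rewrite !inE.
    by case: (eqVneq y a) => [->|]; rewrite ?ha ?orbT ?orbF ?andbT.
  by case: (eqVneq y a) => [->|]; rewrite ?ha ?orbT ?orbF ?andbF.
rewrite E; case: ifP => ha; last by rewrite addn0.
by rewrite cardsU1 inE (negbTE aS) andbF /= add1n addn1.
Qed.

Lemma tangent (a b : rat) : 0 < a -> 0 < b -> 2 / b - a / b ^+ 2 <= a^-1.
Proof.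
move=> a0 b0.
have -> : 2 / b - a / b ^+ 2 = a^-1 - (b - a) ^+ 2 / (a * b ^+ 2).
  by field; rewrite ?gt_eqF.
rewrite lerBlDr lerDl; apply: divr_ge0; first exact: sqr_ge0.
by apply: mulr_ge0; [apply: ltW | apply: sqr_ge0].
Qed.

Lemma psi_step (x : nat) (b : bool) (u : rat) :
  (2 - 2 / (x + b)%N.+1%:R) - (2 - 2 / x.+1%:R) >=
  2 * u * (if b then x.+1%:R^-1 else 0) - u ^+ 2.
Proof.
case: b => /=; last first.
  rewrite addn0 subrr mulr0 sub0r oppr_le0; exact: sqr_ge0.
have hx : 0 < x.+1%:R :> rat by rewrite ltr0Sn.
set y : rat := x.+1%:R.
have -> : (x + 1)%N.+1%:R = y + 1 :> rat by rewrite /y addn1 -addn1 natrD.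
have hy : 0 < y by [].
have -> : 2 - 2 / (y + 1) - (2 - 2 / y) = 2 / (y * (y + 1)).
  by field; rewrite ?gt_eqF // ?ltr_wpDr.
have y1 : 1 <= y by rewrite /y ler1n.
have h1 : y^-1 ^+ 2 <= 2 / (y * (y + 1)).
  have -> : 2 / (y * (y + 1)) = y^-1 ^+ 2 + (y - 1) / (y * y * (y + 1)).
    by field; rewrite ?gt_eqF // ?ltr_wpDr.
  rewrite lerDl; apply: divr_ge0; first by rewrite subr_ge0.
  by rewrite !mulr_ge0 // ltW // ?ltr_wpDr.
have h2 : 2 * u * y^-1 - u ^+ 2 <= y^-1 ^+ 2.
  move: (sqr_ge0 (y^-1 - u)); set z := y^-1; rewrite sqrrB mulr2n; nra.
exact: le_trans h2 h1.
Qed.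

Lemma psi_bounds (m : nat) : (0 : rat) <= 2 - 2 / (m.+1)%:R <= (2 : rat).
Proof.
have y1 : 1 <= (m.+1)%:R :> rat by rewrite ler1n.
have y0 : 0 < (m.+1)%:R :> rat by rewrite ltr0Sn.
move: y1 y0; set y := (m.+1)%:R => y1 y0.
have h1 : 2 / y <= 2.
  by rewrite ler_pdivrMr // ler_peMr.
have h2 : 0 <= 2 / y by rewrite divr_ge0 // ltW.
by rewrite subr_ge0 h1 /= lerBlDr lerDl.
Qed.

Lemma final_arith (L B s a n k l : rat) :
  0 < L -> 0 < B -> L * B = s -> B < l -> 0 < a -> a * n <= s -> 0 < n ->
  2 * l ^+ 2 / a ^+ 2 <= k -> k * (L ^+ 2 / n) <= 2 * n -> False.
Proof.
move=> L0 B0 LB Bl a0 an n0 hk hf.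
have Y0 : 0 < a * n by rewrite mulr_gt0.
have XY : a * n < L * l by rewrite (le_lt_trans an) // -LB ltr_pM2l.
have l0 : 0 < l by apply: lt_trans Bl.
have XY2 : (a * n) ^+ 2 < (L * l) ^+ 2.
  by rewrite ltr_pXn2r // nnegrE ltW // mulr_gt0.
have hk' : 2 * l ^+ 2 <= k * a ^+ 2 by rewrite -ler_pdivrMr // exprn_gt0.
have k0 : 0 < k.
  apply: lt_le_trans hk; rewrite divr_gt0 ?exprn_gt0 // mulr_gt0 ?exprn_gt0 //.
have hf' : k * L ^+ 2 <= 2 * n ^+ 2.
  move: hf; rewrite mulrA ler_pdivrMr // => hf; apply: le_trans hf _.
  by rewrite expr2 mulrA.
have e1 : k * (L * l) ^+ 2 <= k * (a * n) ^+ 2.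
  have -> : k * (L * l) ^+ 2 = (k * L ^+ 2) * l ^+ 2 by ring.
  have -> : k * (a * n) ^+ 2 = (k * a ^+ 2) * n ^+ 2 by ring.
  apply: (@le_trans _ _ (2 * n ^+ 2 * l ^+ 2)).
    by rewrite ler_pM2r ?exprn_gt0.
  have -> : 2 * n ^+ 2 * l ^+ 2 = (2 * l ^+ 2) * n ^+ 2 by ring.
  by rewrite ler_pM2r ?exprn_gt0.
have := XY2; rewrite -(ltr_pM2l k0) ltNge e1 //.
Qed.
Theorem theorem4 (n : nat) (A : finType) (P : profile n A) (r : seq A)
  (alpha : rat) (lambda : nat) (N' : {set 'I_n}) (k : nat) :
  (0 < n)%N ->
  valid_profile P ->
  0 < alpha -> alpha <= 1 ->
  seqPAV_output P r ->
  significant P alpha lambda N' ->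
  k%:Z = Num.ceil (2 * (lambda.+1)%:R ^+ 2 / alpha ^+ 2) ->
  lambda%:R <= avg P N' (prefix_set r k).
Proof.
move=> n0 valid a0 a1 [Hr Hstep] [Hs Hl] Hk.
have Huniq : uniq r by rewrite (perm_uniq Hr) enum_uniq.
have Hmem : forall x, x \in r by move=> x; rewrite (perm_mem Hr) mem_enum.
set s := #|N'|.
have nr0 : 0 < n%:R :> rat by rewrite ltr0n.
have s_ge : alpha * n%:R <= s%:R.
  by have := ceil_ge_rat (alpha * n%:R); rewrite -Hs pmulrn.
have s_pos : 0 < s%:R :> rat by apply: lt_le_trans s_ge; rewrite mulr_gt0.
have k_ge : 2 * (lambda.+1)%:R ^+ 2 / alpha ^+ 2 <= k%:R.
  by have := ceil_ge_rat (2 * (lambda.+1)%:R ^+ 2 / alpha ^+ 2); rewrite -Hk pmulrn.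
set C := \bigcap_(i in N') P i.
have HC : forall i, i \in N' -> C \subset P i by move=> i iN; exact: bigcap_inf.
case: (boolP (C \subset prefix_set r k)) => HCS.
  rewrite /avg ler_pdivlMr // -/s mulr_natr -sumr_const; apply: ler_sum => i iN.
  rewrite ler_nat; apply: leq_trans Hl _; apply: subset_leq_card.
  by rewrite subsetI HC.
case/subsetPn: HCS => c cC cS.
have cP : forall i, i \in N' -> c \in P i by move=> i iN; exact: (subsetP (HC i iN)).
have ksz : (k < size r)%N.
  rewrite ltnNge; apply/negP => kle; move: cS.
  by rewrite /prefix_set inE take_oversize // Hmem.
rewrite leNgt; apply/negP => Hlt.
pose x i t := #|P i :&: prefix_set r t|.
have Hpre : forall t, (t < size r)%N ->
    prefix_set r t.+1 = prefix_set r t :|: [set nth c r t].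
  move=> t ht; rewrite /prefix_set (take_nth c) //; apply/setP=> y.
  by rewrite !inE mem_rcons in_cons orbC.
have Hnot : forall t, (t < size r)%N -> nth c r t \notin prefix_set r t.
  by move=> t ht; rewrite inE in_take ?mem_nth // index_uniq // ltnn.
have Hsub : forall t, (t <= k)%N -> prefix_set r t \subset prefix_set r k.
  move=> t htk; apply/subsetP => y; rewrite !inE -(take_takel _ htk).
  exact: mem_take.
have cnot : forall t, (t <= k)%N -> c \notin prefix_set r t.
  by move=> t htk; apply: contra cS; apply: (subsetP (Hsub t htk)).
have xle : forall i t, (t <= k)%N -> (x i t <= x i k)%N.
  by move=> i t htk; apply: subset_leq_card; apply: setIS; apply: Hsub.
set av := avg P N' (prefix_set r k).
have av0 : 0 <= av by rewrite /av /avg divr_ge0 // sumr_ge0.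
have avE : \sum_(i in N') (x i k)%:R = av * s%:R.
  by rewrite /av /avg mulfVK // gt_eqF.
set B := av + 1.
have B0 : 0 < B by rewrite /B ltr_wpDl.
set L := s%:R / B.
pose g t := \sum_(i < n) (if nth c r t \in P i then ((x i t).+1)%:R^-1 else 0 : rat).
have Hg : forall t, (t < k)%N -> L <= g t.
  move=> t htk.
  have htr : (t < size r)%N := ltn_trans htk ksz.
  have ct : c \notin take t r by have := cnot t (ltnW htk); rewrite inE.
  have := Hstep t c htr ct.
  rewrite !gain_formula ?Hnot ?cnot ?(ltnW htk) //.
  apply: le_trans.
  rewrite (bigID (fun i => i \in N')) /= -[L]addr0; apply: lerD; last first.
    by apply: sumr_ge0 => i _; case: (c \in P i); rewrite ?invr_ge0 ?ler0n.
  apply: (@le_trans _ _ (\sum_(i in N') ((x i k).+1)%:R^-1)); last first.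
    apply: ler_sum => i iN; rewrite cP //.
    rewrite lef_pV2 ?posrE ?ltr0Sn // ler_nat ltnS; exact: xle (ltnW htk).
  apply: (@le_trans _ _ (\sum_(i in N') (2 / B - ((x i k).+1)%:R / B ^+ 2))); last first.
    by apply: ler_sum => i iN; apply: tangent; rewrite ?ltr0Sn.
  rewrite sumrB sumr_const -mulr_suml.
  have -> : \sum_(i in N') ((x i k).+1)%:R = av * s%:R + s%:R.
    by rewrite -avE -[s%:R]sumr_const -big_split /=; apply: eq_bigr => i _; rewrite -addn1 natrD.
  rewrite /L -[_ *+ #|N'|]mulr_natr -/s.
  have -> : av * s%:R + s%:R = B * s%:R by rewrite /B; ring.
  have -> : 2 / B * s%:R - B * s%:R / B ^+ 2 = s%:R / B by field; rewrite gt_eqF.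
  by [].
have xstep : forall i t, (t < size r)%N ->
    x i t.+1 = (x i t + (nth c r t \in P i))%N.
  by move=> i t ht; rewrite /x Hpre // card_step // Hnot.
pose psi t := \sum_(i < n) (2 - 2 / ((x i t).+1)%:R : rat).
have L0 : 0 < L by rewrite /L divr_gt0.
set u := L / n%:R.
have Hpsi : forall t, (t < k)%N -> psi t + L ^+ 2 / n%:R <= psi t.+1.
  move=> t htk; have htr : (t < size r)%N := ltn_trans htk ksz.
  rewrite addrC -lerBrDr /psi -sumrB.
  apply: (@le_trans _ _ (\sum_(i < n)
     (2 * u * (if nth c r t \in P i then ((x i t).+1)%:R^-1 else 0) - u ^+ 2))); last first.
    by apply: ler_sum => i _; rewrite xstep //; apply: psi_step.
  rewrite sumrB -mulr_sumr sumr_const card_ord -/(g t).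
  have := Hg t htk => hg.
  have hu : 0 < u by rewrite /u divr_gt0.
  apply: (@le_trans _ _ (2 * u * L - u ^+ 2 *+ n)).
    rewrite /u -mulr_natr; rewrite le_eqVlt; apply/orP; left; apply/eqP; field; by rewrite gt_eqF.
  have h : 2 * u * L <= 2 * u * g t by rewrite ler_pM2l // mulr_gt0.
  exact: (lerD h (lexx _)).
have Hind : forall t, (t <= k)%N -> t%:R * (L ^+ 2 / n%:R) <= psi t.
  elim => [|t IH] htk.
    rewrite mul0r /psi; apply: sumr_ge0 => i _.
    by case/andP: (psi_bounds (x i 0)).
  apply: le_trans (Hpsi t htk).
  rewrite -natr1 mulrDl mul1r; apply: lerD => //; exact: IH (ltnW htk).
have Hup : psi k <= 2 *+ n.
  rewrite -[n in 2 *+ n]card_ord -sumr_const; apply: ler_sum => i _.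
  by case/andP: (psi_bounds (x i k)).
have Hfin := le_trans (Hind k (leqnn k)) Hup.
have LB : L * B = s%:R by rewrite /L divfK // gt_eqF.
have Blt : B < (lambda.+1)%:R by rewrite /B -natr1 ltrD2r.
move: Hfin; rewrite -[2 *+ n]mulr_natr => Hfin.
exact: (final_arith _ _ _ _ _ _ _ L0 B0 LB Blt a0 s_ge nr0 k_ge Hfin).
Qed.
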